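(* Let $(X,\mathrm{dist})$ be a distance space, $r_1<r_2$, and $\mathcal{H}$ an $(r_1,r_2,p_1,p_2)$-sensitive family of hash functions on $X$ with $0<p_1\le 1$. Let $k, L$ be positive integers, let $\varepsilon > 0$, and let $m$ be an integer with $m \ge \left\lceil \frac{1-p_1}{p_1}\cdot\frac{k}{\ln(1+\varepsilon)}\right\rceil$, $m\ge 1$. Let $h_{i,j}$ for $i\in[k]$, $j\in[m]$ be sampled independently from $\mathcal{H}$, and let $f_1,\dots,f_k\colon [L]\to[m]$ be pairwise independent hash functions, independent of each other and of the $h_{i,j}$. For $l\in[L]$ define $g_l(x) = (h_{1,f_1(l)}(x), \dots, h_{k,f_k(l)}(x))$. Then for every pair of points $x,y\in X$ with $\mathrm{dist}(x,y)\le r_1$, writing $p = \Pr_{h\sim\mathcal{H}}[h(x)=h(y)]$ and $\mu = L p^k$, we have $$\Pr[\nexists\, l\in[L] \colon g_l(x) = g_l(y)] \le \frac{1+\varepsilon\mu}{1+(1+\varepsilon)\mu}.$$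
   Context: Here $[n]=\{1,\dots,n\}$. A distribution $\mathcal{H}$ over functions $h\colon X \to R$ is $(r_1, r_2, p_1, p_2)$-sensitive if for all $x, y \in X$ and $h \sim \mathcal{H}$: if $\mathrm{dist}(x,y) \le r_1$ then $\Pr[h(x)=h(y)] \ge p_1$, and if $\mathrm{dist}(x,y) \ge r_2$ then $\Pr[h(x)=h(y)] \le p_2$. A family of functions $f\colon[L]\to[m]$ is pairwise independent if for distinct $l\neq l'$ the pair $(f(l),f(l'))$ is uniformly distributed on $[m]^2$. *)

(* Defs.v *)
From HB Require Import structures.
From mathcomp Require Import all_boot all_order all_algebra.
From mathcomp Require Import all_classical all_reals all_analysis.
Set Implicit Arguments. Unset Strict Implicit. Unset Printing Implicit Defensive.
Import Order.TTheory GRing.Theory Num.Theory.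
Local Open Scope classical_set_scope.
Local Open Scope ring_scope.

(* A distribution over hash functions X -> Rng is represented by a probability
   space (Om, P) together with a map H : Om -> (X -> Rng); h ~ H means h = H w
   with w ~ P.  Pr_{h ~ H}[h x = h y] = P [set w | H w x = H w y]. *)
Definition collision_prob {d} {Om : measurableType d} {R : realType} {X Rng : Type}
  (P : probability Om R) (H : Om -> X -> Rng) (x y : X) : R :=
  fine (P [set w | H w x = H w y]).

Definition sensitive {d} {Om : measurableType d} {R : realType} {X Rng : Type}
  (dist : X -> X -> R) (P : probability Om R) (H : Om -> X -> Rng)
  (r1 r2 p1 p2 : R) : Prop :=
  forall x y : X,
    (dist x y <= r1 -> p1 <= collision_prob P H x y) /\
    (r2 <= dist x y -> collision_prob P H x y <= p2).

Definition pairwise_indep {d} {Om' : measurableType d} {R : realType} (L m : nat)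
  (Q : probability Om' R) (f : Om' -> {ffun 'I_L -> 'I_m}) : Prop :=
  forall (l l' : 'I_L), l != l' -> forall a b : 'I_m,
    fine (Q [set w | f w l = a /\ f w l' = b]) = 1 / (m%:R ^+ 2).

Definition sampled_indep {d d'} {Om : measurableType d} {Om' : measurableType d'}
  {R : realType} (k m L : nat) (P : probability Om R) (Q : probability Om' R)
  (om : 'I_k -> 'I_m -> Om' -> Om) (ff : 'I_k -> Om' -> {ffun 'I_L -> 'I_m}) : Prop :=
  forall (A : 'I_k -> 'I_m -> set Om) (B : 'I_k -> {set {ffun 'I_L -> 'I_m}}),
    (forall i j, measurable (A i j)) ->
    fine (Q ((\bigcap_(i in [set: 'I_k]) \bigcap_(j in [set: 'I_m]) (om i j @^-1` A i j))
             `&` (\bigcap_(i in [set: 'I_k]) (ff i @^-1` [set g | g \in B i]))))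
    = (\prod_(i < k) \prod_(j < m) fine (P (A i j)))
      * \prod_(i < k) fine (Q (ff i @^-1` [set g | g \in B i])).

Definition gfun {d d'} {Om : measurableType d} {Om' : measurableType d'}
  {X Rng : Type} (k m L : nat) (H : Om -> X -> Rng)
  (om : 'I_k -> 'I_m -> Om' -> Om) (ff : 'I_k -> Om' -> {ffun 'I_L -> 'I_m})
  (l : 'I_L) (w : Om') (x : X) : {ffun 'I_k -> Rng} :=
  [ffun i => H (om i (ff i w l) w) x].

(* Main.v *)
Require Import Defs.
From HB Require Import structures.
From mathcomp Require Import all_boot all_order all_algebra.
From mathcomp Require Import all_classical all_reals all_analysis.
From mathcomp Require Import ring lra.
Import Order.TTheory GRing.Theory Num.Theory.
Local Open Scope classical_set_scope.
Local Open Scope ring_scope.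



Lemma fin_preim_seq d (T : measurableType d) (R : realType)
  (mu : {measure set T -> \bar R}) (U : finType) (g : T -> U)
  (hm : forall u, measurable (g @^-1` [set u])) (s : seq U) :
  uniq s -> measurable (g @^-1` [set u | u \in s]) /\
  mu (g @^-1` [set u | u \in s]) = (\sum_(u <- s) mu (g @^-1` [set u]))%E.
Proof.
elim: s => [|a s IH] /=.
  have -> : g @^-1` [set u | u \in [::]] = set0.
    by apply/seteqP; split => w //=; rewrite in_nil.
  by rewrite big_nil measure0.
move=> /andP[as_ /IH [ms IHe]].
have -> : g @^-1` [set u | u \in a :: s] = g @^-1` [set a] `|` g @^-1` [set u | u \in s].
  apply/seteqP; split => w /=; rewrite in_cons.
    by case/orP => [/eqP->|]; [left|right].
  by case => [->|->]; rewrite ?eqxx ?orbT.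
split; first exact: measurableU.
rewrite measureU // ?big_cons ?IHe //.
- by congr (_ + _)%E; exact: IHe.
- apply/seteqP; split => w //= [H1 H2]; by move: as_; rewrite -H1 H2.
Qed.

Lemma fin_preim d (T : measurableType d) (R : realType)
  (mu : {measure set T -> \bar R}) (U : finType) (g : T -> U)
  (hm : forall u, measurable (g @^-1` [set u])) (S : pred U) :
  measurable (g @^-1` [set u | S u]) /\
  mu (g @^-1` [set u | S u]) = (\sum_(u | S u) mu (g @^-1` [set u]))%E.
Proof.
have [] := @fin_preim_seq _ _ _ mu _ _ hm _ (enum_uniq S).
have -> : [set u | u \in enum S] = [set u | S u].
  by apply/seteqP; split => u /=; rewrite mem_enum.
by move=> ? ->; rewrite big_enum.
Qed.

Lemma fin_preimR d (T : measurableType d) (R : realType)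
  (mu : {finite_measure set T -> \bar R}) (U : finType) (g : T -> U)
  (hm : forall u, measurable (g @^-1` [set u])) (S : pred U) :
  mu (g @^-1` [set u | S u]) = (\sum_(u | S u) fine (mu (g @^-1` [set u])))%:E.
Proof.
have [_ ->] := @fin_preim _ _ _ mu _ _ hm S.
rewrite -sumEFin; apply: eq_bigr => u _.
by rewrite fineK // fin_num_measure.
Qed.


Lemma prod_bool (R : realType) (I : finType) (b : I -> bool) :
  \prod_i ((b i)%:R : R) = ([forall i, b i])%:R.
Proof.
case: (boolP [forall i, b i]) => [/forallP h|/forallPn [i hi]].
  by rewrite big1 // => i _; rewrite h.
apply/eqP/prodf_eq0; exists i => //; by rewrite (negbTE hi).
Qed.

Lemma sum_c (R : realType) (m : nat) (p : R) (a b : 'I_m) :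
  \sum_(c : {ffun 'I_m -> bool})
     (\prod_j (if c j then p else 1 - p)) * (c a && c b)%:R = p ^+ (a != b).+1.
Proof.
pose S : {set 'I_m} := ([set a; b])%SET.
pose F := fun (j : 'I_m) (bb : bool) =>
  (if bb then p else 1 - p) * (if j \in S then (bb : nat)%:R else 1).
have E (c : {ffun 'I_m -> bool}) : (\prod_j (if c j then p else 1 - p)) * (c a && c b)%:R
    = \prod_j F j (c j).
  rewrite /F big_split /= -big_mkcond /=; congr (_ * _).
  case: (eqVneq a b) => [eab|ab].
    rewrite /S -eab (_ : [set a; a]%SET = [set a]%SET) ?big_set1 ?andbb //.
    by apply/setP => j; rewrite !inE orbb.
  by rewrite /S big_setU1 ?inE // big_set1; case: (c a); case: (c b); rewrite /= ?mul1r ?mul0r.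
rewrite (eq_bigr _ (fun c _ => E c)) -(bigA_distr_bigA F).
rewrite (eq_bigr (fun j => if j \in S then p else 1)); last first.
  move=> j _; rewrite big_bool /F; case: (j \in S) => /=.
  - by rewrite !mulr1 mulr0 addr0.
  - by rewrite !mulr1 addrC subrK.
by rewrite -big_mkcond /= prodr_const /S cards2.
Qed.

Lemma sum_pair (R : realType) (m L : nat) (p : R)
   (pi : {ffun 'I_L -> 'I_m} -> R) (l l' : 'I_L) :
  \sum_(u : {ffun 'I_m -> bool} * {ffun 'I_L -> 'I_m})
     ((\prod_j (if u.1 j then p else 1 - p)) * pi u.2)
       * (u.1 (u.2 l) && u.1 (u.2 l'))%:R
  = \sum_f pi f * p ^+ (f l != f l').+1.
Proof.
rewrite -(pair_bigA _ (fun (c : {ffun 'I_m -> bool}) (f : {ffun 'I_L -> 'I_m}) => ((\prod_j (if c j then p else 1 - p)) * pi f)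
       * (c (f l) && c (f l'))%:R)) /= exchange_big /=.
apply: eq_bigr => f _; rewrite -sum_c mulr_sumr; apply: eq_bigr => c _.
by rewrite mulrA [pi f * _]mulrC.
Qed.


Lemma V_eq (R : realType) (m L : nat) (p : R) (pi : {ffun 'I_L -> 'I_m} -> R)
  (l l' : 'I_L) (hm : (0 < m)%N)
  (h1 : \sum_f pi f = 1)
  (h2 : l != l' -> forall a : 'I_m,
      \sum_(f : {ffun 'I_L -> 'I_m} | (f l == a) && (f l' == a)) pi f = 1 / (m%:R ^+ 2)) :
  \sum_(f : {ffun 'I_L -> 'I_m}) pi f * p ^+ (f l != f l').+1
  = if l == l' then p else p ^+ 2 + (p - p ^+ 2) / m%:R.
Proof.
case: (eqVneq l l') => [<-|ll].
  under eq_bigr do rewrite eqxx /= expr1.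
  by rewrite -mulr_suml h1 mul1r.
rewrite (eq_bigr (fun f => pi f * p ^+ 2 + (p - p ^+ 2) * (if f l == f l' then pi f else 0))); last first.
  move=> f _; case: (f l == f l') => /=; rewrite ?mulr0 ?addr0 //; ring.
rewrite big_split /= -mulr_suml h1 mul1r -mulr_sumr -big_mkcond /=.
rewrite (partition_big (fun f : {ffun 'I_L -> 'I_m} => f l) xpredT) //=.
rewrite (eq_bigr (fun a => 1 / (m%:R ^+ 2))); last first.
  move=> a _; rewrite -(h2 ll a); apply: eq_bigl => f.
  by case: (eqVneq (f l) a) => [->|]; rewrite ?andbT ?andbF // eq_sym.
rewrite sumr_const card_ord.
have m0 : (m%:R : R) != 0 by rewrite pnatr_eq0 -lt0n.
congr (_ + _ * _); rewrite -mulr_natr; field; exact: m0.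
Qed.

Lemma pow_bound (R : realType) (p p1 eps : R) (k m : nat) :
  0 < p1 -> p1 <= p -> p <= 1 -> 0 < eps -> (0 < m)%N ->
  Num.ceil ((1 - p1) / p1 * (k%:R / ln (1 + eps))) <= m%:Z ->
  (p ^+ 2 + (p - p ^+ 2) / m%:R) ^+ k <= (1 + eps) * (p ^+ 2) ^+ k.
Proof.
move=> p10 p1p p1' e0 m0 hc.
have p0 : 0 < p by apply: lt_le_trans p1p.
have M0 : (0 : R) < m%:R by rewrite ltr0n.
have l0 : 0 < ln (1 + eps) by apply: ln_gt0; rewrite ltrDl.
set x := (1 - p) / (p * m%:R).
have -> : p ^+ 2 + (p - p ^+ 2) / m%:R = p ^+ 2 * (1 + x).
  rewrite /x; field; apply/andP; split; rewrite ?gt_eqF //.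
rewrite exprMn mulrC; apply: ler_wpM2r; first by rewrite exprn_ge0 // sqr_ge0.
have x0 : 0 <= x by rewrite /x divr_ge0 ?subr_ge0 // mulr_ge0 // ltW.
apply: (@le_trans _ _ (expR x ^+ k)).
  apply: lerXn2r; [by rewrite nnegrE addr_ge0|by rewrite nnegrE expR_ge0|exact: expR_ge1Dx].
rewrite -expRM_natl -[X in _ <= X](@lnK _ (1 + eps)); last first.
  by rewrite posrE addr_gt0.
rewrite ler_expR.
have hA : (1 - p1) / p1 * (k%:R / ln (1 + eps)) <= m%:R.
  apply: (le_trans (ceil_ge _)).
  by rewrite (_ : (m%:R : R) = (m%:Z)%:~R) // ler_int.
have h1 : (1 - p) / p <= (1 - p1) / p1.
  rewrite ler_pdivrMr // mulrAC ler_pdivlMr //; nra.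
have hB : (1 - p1) / p1 * k%:R <= m%:R * ln (1 + eps).
  by move: hA; rewrite mulrA ler_pdivrMr.
have -> : k%:R * ((1 - p) / (p * m%:R)) = ((1 - p) / p * k%:R) / m%:R.
  by field; apply/andP; split; rewrite gt_eqF.
rewrite ler_pdivrMr // [_ * m%:R]mulrC; apply: le_trans hB.
by rewrite ler_wpM2r.
Qed.
Theorem lemma10
  (R : realType) (X Rng : Type) (dist : X -> X -> R)
  (d : measure_display) (Om : measurableType d) (P : probability Om R)
  (H : Om -> X -> Rng)
  (r1 r2 p1 p2 : R)
  (Hr : r1 < r2)
  (Hmeas : forall x y : X, measurable [set w | H w x = H w y])
  (Hsens : sensitive dist P H r1 r2 p1 p2)
  (Hp1 : 0 < p1) (Hp1' : p1 <= 1)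
  (k L : nat) (Hk : (0 < k)%N) (HL : (0 < L)%N)
  (eps : R) (Heps : 0 < eps)
  (m : nat) (Hm1 : (1 <= m)%N)
  (Hm : Num.ceil ((1 - p1) / p1 * (k%:R / ln (1 + eps))) <= m%:Z)
  (d' : measure_display) (Om' : measurableType d') (Q : probability Om' R)
  (om : 'I_k -> 'I_m -> Om' -> Om)
  (ff : 'I_k -> Om' -> {ffun 'I_L -> 'I_m})
  (Hom_meas : forall i j, measurable_fun [set: Om'] (om i j))
  (Hff_meas : forall i (B : {set {ffun 'I_L -> 'I_m}}),
      measurable (ff i @^-1` [set g | g \in B]))
  (Hindep : sampled_indep P Q om ff)
  (Hpw : forall i, pairwise_indep Q (ff i)) :
  forall x y : X, dist x y <= r1 ->
    let p := collision_prob P H x y in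
    let mu := L%:R * p ^+ k in
    (Q [set w | ~ (exists l : 'I_L, gfun H om ff l w x = gfun H om ff l w y)]
      <= ((1 + eps * mu) / (1 + (1 + eps) * mu))%:E)%E.

Proof.
move=> x y hxy; cbv zeta.
set p := collision_prob P H x y.
set mu := L%:R * p ^+ k.
set C := [set w | H w x = H w y].
have mC : measurable C := Hmeas x y.
have p1p : p1 <= p := (Hsens x y).1 hxy.
have p0 : 0 < p := lt_le_trans Hp1 p1p.
have PC : P C = p%:E by rewrite /p /collision_prob fineK // fin_num_measure.
have pl1 : p <= 1 by rewrite -lee_fin -PC probability_le1.
have PnC : fine (P (~` C)) = 1 - p by rewrite probability_setC // PC.
pose U := ({ffun 'I_m -> bool} * {ffun 'I_L -> 'I_m})%type.
pose Phi : Om' -> {ffun 'I_k -> U} := fun w =>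
  [ffun i => ([ffun j => `[< H (om i j w) x = H (om i j w) y >]], ff i w)].
pose wt (b : bool) := if b then p else 1 - p.
pose pi i (f : {ffun 'I_L -> 'I_m}) := fine (Q (ff i @^-1` [set f])).
pose rho i (u : U) := (\prod_j wt (u.1 j)) * pi i u.2.
pose q (t : {ffun 'I_k -> U}) := fine (Q (Phi @^-1` [set t])).
have ffset i f : ff i @^-1` [set g | g \in [set f]%SET] = ff i @^-1` [set f].
  by apply/seteqP; split => w /= h; [move: h; rewrite inE => /eqP | rewrite inE h].
have mff i f : measurable (ff i @^-1` [set f]) by rewrite -ffset.
pose A (t : {ffun 'I_k -> U}) i j := if (t i).1 j then C else ~` C.
have mA t i j : measurable (A t i j).
  by rewrite /A; case: ((t i).1 j); [exact: mC | exact: measurableC].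
have PhiE t : Phi @^-1` [set t] =
   (\bigcap_(i in [set: 'I_k]) \bigcap_(j in [set: 'I_m]) (om i j @^-1` A t i j))
   `&` (\bigcap_(i in [set: 'I_k]) (ff i @^-1` [set g | g \in [set (t i).2]%SET])).
  apply/seteqP; split => w /=.
    move=> <-; split => i _ /=; [move=> j _ /=|]; rewrite /A /Phi ffunE /=;
      [rewrite ffunE; by case: asboolP | by rewrite inE].
  move=> [h1 h2]; apply/ffunP => i; rewrite ffunE.
  have e1 := h1 i I; have e2 := h2 i I; move: e1 e2; rewrite /A.
  case: (t i) => c f /= e1; rewrite inE => /eqP ->; congr pair.
  apply/ffunP => j; rewrite ffunE; have := e1 j I; rewrite /=.
  by case: (c j) => h; [exact: asboolT | exact: asboolF].
have mPhi t : measurable (Phi @^-1` [set t]).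
  rewrite PhiE; apply: measurableI; apply: fin_bigcap_measurable;
    try exact: finite_finset; move=> i _.
    apply: fin_bigcap_measurable; first exact: finite_finset.
    move=> j _; have := Hom_meas i j measurableT _ (mA t i j); by rewrite setTI.
  exact: Hff_meas.
have QT : Q setT = 1%E by exact: probability_setT.
have qE t : q t = \prod_i rho i (t i).
  have h := Hindep (A t) (fun i => [set (t i).2]%SET) (mA t).
  rewrite /q PhiE h -big_split /=; apply: eq_bigr => i _; rewrite /rho.
  congr (_ * _); last by rewrite ffset.
  apply: eq_bigr => j _; rewrite /A /wt; by case: ((t i).1 j).
have pi1 i : \sum_f pi i f = 1.
  have := @fin_preimR _ _ _ Q _ (ff i) (mff i) xpredT.
  rewrite (_ : ff i @^-1` [set u | xpredT u] = setT); last by apply/seteqP; split.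
  by move=> h; have [] : ((\sum_f pi i f)%:E = 1%E) := etrans (esym h) QT.
have pi2 i l l' : l != l' -> forall a : 'I_m,
    \sum_(f : {ffun 'I_L -> 'I_m} | (f l == a) && (f l' == a)) pi i f = 1 / (m%:R ^+ 2).
  move=> ll a; have := Hpw i l l' ll a a.
  rewrite (_ : [set w | ff i w l = a /\ ff i w l' = a] =
               ff i @^-1` [set u | (u l == a) && (u l' == a)]); last first.
    apply/seteqP; split => w /=; first by case=> -> ->; rewrite !eqxx.
    by case/andP => /eqP -> /eqP ->.
  by rewrite (@fin_preimR _ _ _ Q _ (ff i) (mff i)).
have q1 : \sum_t q t = 1.
  have := @fin_preimR _ _ _ Q _ Phi mPhi xpredT.
  rewrite (_ : Phi @^-1` [set u | xpredT u] = setT); last by apply/seteqP; split.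
  by move=> h; have [] : ((\sum_t q t)%:E = 1%E) := etrans (esym h) QT.
have q0 t : 0 <= q t by apply: fine_ge0; apply: measure_ge0.
pose Y (l l' : 'I_L) (t : {ffun 'I_k -> U}) :=
  \prod_i ((((t i).1 ((t i).2 l) && (t i).1 ((t i).2 l')) : nat)%:R : R).
pose V (l l' : 'I_L) := if l == l' then p else p ^+ 2 + (p - p ^+ 2) / m%:R.
have EY l l' : \sum_t q t * Y l l' t = V l l' ^+ k.
  under eq_bigr do rewrite qE /Y -big_split /=.
  rewrite -(bigA_distr_bigA (fun i (u : U) => rho i u * (((u.1 (u.2 l) && u.1 (u.2 l')) : nat)%:R))).
  rewrite (eq_bigr (fun=> V l l')) ?prodr_const ?card_ord // => i _.
  rewrite /rho /wt (@sum_pair R m L p (pi i)) /V; apply: V_eq => //; exact: pi2.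
pose Z t := \sum_l Y l l t.
have YY l l' t : Y l l t * Y l' l' t = Y l l' t.
  rewrite /Y -big_split /=; apply: eq_bigr => i _.
  by rewrite !andbb -natrM mulnb.
have ZZ t : Z t ^+ 2 = \sum_l \sum_l' Y l l' t.
  rewrite expr2 /Z mulr_suml; apply: eq_bigr => l _.
  rewrite mulr_sumr; apply: eq_bigr => l' _; exact: YY.
have S1 : \sum_t q t * Z t = mu.
  rewrite /Z; under eq_bigr do rewrite mulr_sumr.
  rewrite exchange_big /=; under eq_bigr do rewrite EY /V eqxx.
  by rewrite sumr_const card_ord /mu mulr_natl.
have Vb l l' : V l l' ^+ k <= (l == l')%:R * p ^+ k + (1 + eps) * (p ^+ 2) ^+ k.
  have e0 : 0 <= (1 + eps) * (p ^+ 2) ^+ k.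
    apply: mulr_ge0; [by rewrite addr_ge0 // ltW | by rewrite exprn_ge0 // sqr_ge0].
  rewrite /V; have [e|ll] := eqVneq l l'.
    by rewrite /= mul1r lerDl.
  rewrite /= mul0r add0r; exact: (@pow_bound R p p1 eps k m Hp1 p1p pl1 Heps Hm1 Hm).
have S2 : \sum_t q t * Z t ^+ 2 <= mu + (1 + eps) * mu ^+ 2.
  have -> : \sum_t q t * Z t ^+ 2 = \sum_l \sum_l' \sum_t q t * Y l l' t.
    rewrite (@eq_bigr _ _ _ _ _ _ _ (fun t => \sum_l \sum_l' q t * Y l l' t)).
      by rewrite exchange_big; apply: eq_bigr => l _; rewrite exchange_big.
    move=> t _; rewrite ZZ mulr_sumr; apply: eq_bigr => l _; by rewrite mulr_sumr.
  apply: (@le_trans _ _ (\sum_(l < L) \sum_(l' < L)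
      ((l == l')%:R * p ^+ k + (1 + eps) * (p ^+ 2) ^+ k))).
    apply: ler_sum => l _; apply: ler_sum => l' _; rewrite EY; exact: Vb.
  have -> : \sum_(l < L) \sum_(l' < L)
      ((l == l')%:R * p ^+ k + (1 + eps) * (p ^+ 2) ^+ k)
      = \sum_(l < L) (p ^+ k + L%:R * ((1 + eps) * (p ^+ 2) ^+ k)).
    apply: eq_bigr => l _; rewrite big_split /= sumr_const card_ord mulr_natl.
    congr (_ + _); rewrite (bigD1 l) //= eqxx mul1r big1 ?addr0 // => l' hl.
    by rewrite eq_sym (negbTE hl) mul0r.
  rewrite big_split /= !sumr_const card_ord !mulr_natl /mu.
  rewrite -(mulr_natl (p ^+ k)) -(mulr_natl ((1 + eps) * (p ^+ 2) ^+ k *+ L)) -(mulr_natl ((1 + eps) * (p ^+ 2) ^+ k)).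
  rewrite -exprM mulnC exprM le_eqVlt; apply/orP; left; apply/eqP.
  set a := p ^+ k; ring.
have Yll l t : Y l l t = ([forall i, (t i).1 ((t i).2 l)] : nat)%:R.
  by rewrite /Y; under eq_bigr do rewrite andbb; rewrite prod_bool.
have ZE t : (Z t != 0) = [exists l, [forall i, (t i).1 ((t i).2 l)]].
  rewrite /Z; under eq_bigr do rewrite Yll.
  apply/idP/idP.
    apply: contraLR => hn; rewrite negbK; apply/eqP; rewrite big1 // => l _.
    case: (boolP [forall i, (t i).1 ((t i).2 l)]) => h //=.
    by exfalso; move/negP: hn; apply; apply/existsP; exists l.
  move=> /existsP [l0 hl0]; rewrite (bigD1 l0) //= hl0 /=.
  rewrite paddr_eq0 ?oner_eq0 //; apply: sumr_ge0 => l _; exact: ler0n.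
have key w l : (gfun H om ff l w x = gfun H om ff l w y) <->
    [forall i, (Phi w i).1 ((Phi w i).2 l)].
  split.
    move=> e; apply/forallP => i; rewrite /Phi !ffunE /=; apply/asboolP.
    by have := congr1 (fun g : {ffun 'I_k -> Rng} => g i) e; rewrite /gfun !ffunE.
  move=> /forallP h; apply/ffunP => i; rewrite /gfun !ffunE.
  by have := h i; rewrite /Phi !ffunE /= => /asboolP.
have failE : [set w | ~ (exists l : 'I_L, gfun H om ff l w x = gfun H om ff l w y)]
    = Phi @^-1` [set t | Z t == 0].
  apply/seteqP; split => w /=.
    move=> hn; rewrite -[_ == 0]negbK ZE; apply/negP => /existsP [l hl].
    by apply: hn; exists l; apply/key.
  move=> hz [l hl]; move: hz; rewrite -[_ == 0]negbK ZE => /negP; apply.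
  by apply/existsP; exists l; apply/key.
rewrite failE (@fin_preimR _ _ _ Q _ Phi mPhi) lee_fin.
pose s := \sum_t q t * ((Z t != 0) : nat)%:R.
have hs : \sum_(t | Z t == 0) q t = 1 - s.
  have -> : s = \sum_(t | ~~ (Z t == 0)) q t.
    rewrite /s [RHS]big_mkcond /=.
    by apply: eq_bigr => t _; case: (Z t != 0); rewrite ?mulr1 ?mulr0.
  by rewrite -q1 [X in _ = X - _](bigID (fun t => Z t == 0)) /= addrK.
rewrite hs.
have mu0 : 0 <= mu by apply: mulr_ge0; [exact: ler0n | apply: exprn_ge0; exact: ltW].
set lam := 1 + (1 + eps) * mu.
have lam0 : 0 < lam.
  have := mulr_ge0 (addr_ge0 ler01 (ltW Heps)) mu0; rewrite /lam; lra.
have hq : 0 <= \sum_t (q t * Z t ^+ 2 + (- (2 * lam)) * (q t * Z t)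
                  + lam ^+ 2 * (q t * ((Z t != 0) : nat)%:R)).
  apply: sumr_ge0 => t _.
  have -> : q t * Z t ^+ 2 + (- (2 * lam)) * (q t * Z t)
                  + lam ^+ 2 * (q t * ((Z t != 0) : nat)%:R)
           = q t * (Z t ^+ 2 - 2 * lam * Z t + lam ^+ 2 * ((Z t != 0) : nat)%:R).
    by ring.
  apply: mulr_ge0 => //; case: eqP => [->|_] /=.
    by rewrite expr0n /= mulr0 subrr mulr0 addr0.
  rewrite mulr1 (_ : _ + _ = (Z t - lam) ^+ 2); first exact: sqr_ge0.
  by ring.
rewrite !big_split /= -!mulr_sumr S1 -/s in hq.
have hls : mu <= lam * s.
  have h2 : 0 <= lam * (lam * s - mu).
    have : lam * mu = mu + (1 + eps) * mu ^+ 2 by rewrite /lam; ring.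
    move: S2 hq; set S := \sum_t q t * Z t ^+ 2 => S2 hq e.
    have -> : lam * (lam * s - mu) = (S + - (2 * lam) * mu + lam ^+ 2 * s) + (lam * mu - S)
      by ring.
    by apply: addr_ge0 => //; rewrite subr_ge0 e.
  by move: h2; rewrite pmulr_rge0 // subr_ge0.
rewrite ler_pdivlMr // mulrBl mul1r mulrC /lam; move: hls; rewrite /lam; lra.
Qed.
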